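(* Let $S,T$ be finite nonempty sets, $A,B\in\mathbb{R}^{S\times T}$, $\varepsilon>0$, and $f,g\in\mathbb{R}$ such that $E(f,g)\neq\emptyset$. If either ($f-\varepsilon\ge\alpha$ and $g-\varepsilon\ge\beta$) or ($f-\varepsilon<\alpha$ and $g-\varepsilon<\beta$), then $E\cap E(f,g)\neq\emptyset$.
   Context: $\operatorname{co}(A,B)$ is the convex hull in $\mathbb{R}^2$ of $\{(A(s,t),B(s,t)):s\in S,t\in T\}$. The punishment levels are $\alpha:=\min_{y\in\Delta(T)}\max_{x\in\Delta(S)}xAy$ and $\beta:=\min_{x\in\Delta(S)}\max_{y\in\Delta(T)}xBy$, where $xMy=\sum_{s,t}M(s,t)x(s)y(t)$. The set of uniform equilibrium payoffs is $E:=\{(\bar f,\bar g)\in\operatorname{co}(A,B):\bar f\ge\alpha,\ \bar g\ge\beta\}$, and the $\varepsilon$-acceptable payoff set is $E(f,g):=\operatorname{co}(A,B)\cap\{(\bar f,\bar g)\in\mathbb{R}^2:\bar f+\varepsilon\ge f,\ \bar g+\varepsilon\ge g\}$. *)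

(* Defs.v *)
From HB Require Import structures.
From mathcomp Require Import all_boot all_order all_algebra.
From mathcomp Require Import classical_sets reals.
Set Implicit Arguments. Unset Strict Implicit. Unset Printing Implicit Defensive.
Import Order.TTheory GRing.Theory Num.Theory.
Local Open Scope ring_scope.
Local Open Scope classical_set_scope.

Section Game.
Variables (R : realType) (S T : finType).

Definition mixed (I : finType) (x : I -> R) : Prop :=
  (forall i, 0 <= x i) /\ \sum_(i : I) x i = 1.

Definition bilin (M : S -> T -> R) (x : S -> R) (y : T -> R) : R :=
  \sum_(s : S) \sum_(t : T) M s t * x s * y t.

(* co(A,B): convex hull of {(A s t, B s t)}, i.e. the set of convex
   combinations of these finitely many points. *)
Definition co (A B : S -> T -> R) : set (R * R) :=
  [set p | exists lam : S -> T -> R,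
     (forall s t, 0 <= lam s t) /\ \sum_(s : S) \sum_(t : T) lam s t = 1 /\
     p = (\sum_(s : S) \sum_(t : T) lam s t * A s t,
          \sum_(s : S) \sum_(t : T) lam s t * B s t)].

(* alpha := min_{y in Delta(T)} max_{x in Delta(S)} xAy
   (min/max written as inf/sup; they are attained) *)
Definition alpha (A : S -> T -> R) : R :=
  inf [set r | exists2 y : T -> R, mixed y &
         r = sup [set v | exists2 x : S -> R, mixed x & v = bilin A x y]].

Definition beta (B : S -> T -> R) : R :=
  inf [set r | exists2 x : S -> R, mixed x &
         r = sup [set v | exists2 y : T -> R, mixed y & v = bilin B x y]].

Definition Eq_payoffs (A B : S -> T -> R) : set (R * R) :=
  [set p | co A B p /\ alpha A <= p.1 /\ beta B <= p.2].

Definition Eacc (A B : S -> T -> R) (eps f g : R) : set (R * R) :=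
  [set p | co A B p /\ f <= p.1 + eps /\ g <= p.2 + eps].

End Game.

(* Main.v *)
Require Import Defs.
From HB Require Import structures.
From mathcomp Require Import all_boot all_order all_algebra.
From mathcomp Require Import classical_sets reals.
From mathcomp Require Import ring lra.
Import Order.TTheory GRing.Theory Num.Theory.
Local Open Scope ring_scope.
Local Open Scope classical_set_scope.
Set Implicit Arguments. Unset Strict Implicit. Unset Printing Implicit Defensive.

Section Gordan.
Variables (R : realType) (J : finType).

Definition ip (p y : J -> R) := \sum_j p j * y j.

Fixpoint comb (w : seq R) (Q : seq (J -> R)) (j : J) : R :=
  match w, Q with a :: w', q :: Q' => a * q j + comb w' Q' j | _, _ => 0 end.

Definition Zc Q := exists w : seq R, size w = size Q /\ (forall a, a \in w -> 0 <= a)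
  /\ 0 < \sum_(a <- w) a /\ forall j, comb w Q j = 0.
Definition Neg Q := exists y, forall q, List.In q Q -> ip q y < 0.

Lemma ip_lin (u v w : R) p r y :
  ip (fun j => (u * p j + v * r j) / w) y = (u * ip p y + v * ip r y) / w.
Proof.
rewrite /ip !mulr_sumr -big_split /= mulr_suml; apply: eq_bigr => j _; ring.
Qed.

Lemma ip_add (m : R) p y1 y2 : ip p (fun j => y2 j + m * y1 j) = ip p y2 + m * ip p y1.
Proof.
rewrite /ip mulr_sumr -big_split /=; apply: eq_bigr => j _; ring.
Qed.

Lemma bigmax_P (P : R -> Prop) (x0 : R) (s : seq (J -> R)) F :
  P x0 -> (forall x y, P x -> P y -> P (Num.max x y)) -> (forall q, List.In q s -> P (F q)) ->
  P (\big[Num.max/x0]_(q <- s) F q).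
Proof.
move=> H0 HM; elim: s => [|q s IH] HF; first by rewrite big_nil.
rewrite big_cons; apply: HM; first by apply: HF; left.
by apply: IH => q' Hq'; apply: HF; right.
Qed.

Lemma le_bigmax_In (x0 : R) (s : seq (J -> R)) F q :
  List.In q s -> F q <= \big[Num.max/x0]_(q <- s) F q.
Proof.
elim: s => [|q1 s IH] //= [<-|Hq]; rewrite big_cons le_max.
  by rewrite lexx.
by rewrite IH // orbT.
Qed.

Lemma proj_comb (q0 : J -> R) (b : R) (hb : 0 <= b) (a : (J -> R) -> R) qs w :
  (forall q, List.In q qs -> 0 < a q) -> size w = size qs -> (forall x, x \in w -> 0 <= x) ->
  exists w0 w', [/\ size w' = size qs, 0 <= w0, (forall x, x \in w' -> 0 <= x),
     w0 + \sum_(x <- w') x = \sum_(x <- w) x &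
     forall j, w0 * q0 j + comb w' qs j =
       comb w (map (fun q j => (b * q j + a q * q0 j) / (a q + b)) qs) j].
Proof.
elim: qs w => [|q qs IH] [|x w] //=.
- move=> _ _ _; exists 0, [::]; split => //; first by rewrite !big_nil addr0.
  by move=> j; rewrite mul0r addr0.
- move=> Ha [Hs] Hw.
  have Hw' : forall x', x' \in w -> 0 <= x' by move=> x' Hx'; apply: Hw; rewrite inE Hx' orbT.
  have [w0 [w' [H1 H2 H3 H4 H5]]] := IH w (fun q' Hq' => Ha q' (or_intror Hq')) Hs Hw'.
  have Haq : 0 < a q by apply: Ha; left.
  have Hx : 0 <= x by apply: Hw; rewrite inE eqxx.
  have Hab : 0 < a q + b by lra.
  have Hab' : a q + b != 0 by apply: lt0r_neq0.
  exists (w0 + x * a q / (a q + b)), (x * b / (a q + b) :: w'); split => //=.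
  + by rewrite H1.
  + by apply: addr_ge0 => //; apply: divr_ge0 => //; [apply: mulr_ge0; lra | lra].
  + move=> y; rewrite inE => /orP [/eqP ->|]; last exact: H3.
    by apply: divr_ge0 => //; [apply: mulr_ge0 | lra].
  + rewrite !big_cons -H4; field.
    exact: Hab'.
  + move=> j; rewrite -H5; field; exact: Hab'.
Qed.

Lemma in_In (T : eqType) (x : T) s : x \in s -> List.In x s.
Proof. by elim: s => //= y s IH; rewrite inE => /orP [/eqP ->|/IH]; [left|right]. Qed.

Lemma gordan n : forall Q, size Q = n -> Zc Q \/ Neg Q.
Proof.
elim: n => [|n IH] [|q0 qs] //= Hs.
- by right; exists (fun _ => 0).
case: Hs => Hs.
case: qs Hs => [|q1 qs1] Hs.
  case: (boolP [forall j, q0 j == 0]) => [/forallP H|/forallPn [j0 Hj0]].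
    left; exists [:: 1]; split => //; split.
      by move=> a; rewrite inE => /eqP ->; apply: ler01.
    split; first by rewrite big_cons big_nil addr0 ltr01.
    by move=> j /=; rewrite (eqP (H j)) mulr0 addr0.
  right; exists (fun j => if j == j0 then - q0 j0 else 0) => q [<-|] //.
  rewrite /ip (bigD1 j0) //= eqxx big1 => [|j /negbTE -> ]; last by rewrite mulr0.
  rewrite addr0 mulrN oppr_lt0.
  have : 0 < q0 j0 ^+ 2 by rewrite exprn_even_gt0.
  by rewrite expr2.
set qs := q1 :: qs1.
have [[w [Hw1 [Hw2 [Hw3 Hw4]]]]|[y1 Hy1]] := IH qs Hs.
  left; exists (0 :: w); split; first by rewrite /= Hw1.
  split; first by move=> a; rewrite inE => /orP [/eqP ->|]; [rewrite lexx|apply: Hw2].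
  split; first by rewrite big_cons add0r.
  by move=> j /=; rewrite mul0r add0r Hw4.
case: (boolP (ip q0 y1 < 0)) => Hq0.
  by right; exists y1 => q [<-|/Hy1].
have Hb : 0 <= ip q0 y1 by rewrite leNgt.
set b := ip q0 y1 in Hb Hq0.
set a := fun q => - ip q y1.
have Ha : forall q, List.In q qs -> 0 < a q by move=> q /Hy1; rewrite /a oppr_gt0.
set qs' := map (fun q j => (b * q j + a q * q0 j) / (a q + b)) qs.
have Hs' : size qs' = n by rewrite size_map.
have [[w [Hw1 [Hw2 [Hw3 Hw4]]]]|[y2 Hy2]] := IH qs' Hs'.
  have [w0 [w' [H1 H2 H3 H4 H5]]] := proj_comb q0 Hb Ha (etrans Hw1 (size_map _ _)) Hw2.
  left; exists (w0 :: w'); split; first by rewrite /= H1.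
  split; first by move=> x; rewrite inE => /orP [/eqP ->|/H3].
  split; first by rewrite big_cons H4.
  by move=> j /=; rewrite H5 Hw4.
set d := ip q0 y2.
have Hc : forall q, List.In q qs -> b * (ip q y2 / a q) + d < 0.
  move=> q Hq; have Haq := Ha q Hq.
  have := Hy2 _ (List.in_map (fun q j => (b * q j + a q * q0 j) / (a q + b)) _ _ Hq).
  rewrite ip_lin pmulr_llt0; last by rewrite invr_gt0; lra.
  have -> : b * (ip q y2 / a q) + d = (b * ip q y2 + a q * d) / a q.
    by field; apply: lt0r_neq0.
  by move=> H; rewrite pmulr_llt0 // invr_gt0.
set F := fun q => ip q y2 / a q.
set m := \big[Num.max/F q1]_(q <- qs) F q.
have Hm : b * m + d < 0.
  apply: (@bigmax_P (fun x => b * x + d < 0)); first by apply: Hc; left.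
    by move=> x y Hx Hy; rewrite maxEle; case: ifP.
  exact: Hc.
set e := - d - b * m.
have He : 0 < e by rewrite /e; lra.
set t := e / (2 * b + 1).
have Ht : 0 < t by rewrite /t divr_gt0 //; lra.
have Hte : t * (2 * b + 1) = e by rewrite /t mulrVK // unitfE; apply: lt0r_neq0; lra.
right; exists (fun j => y2 j + (m + t) * y1 j) => q [<-|Hq]; rewrite ip_add.
  have Htb := mulr_ge0 (ltW Ht) Hb.
  have -> : (m + t) * ip q0 y1 = m * b + t * b by rewrite /b; ring.
  have Hte2 : 2 * (t * b) + t = - d - m * b.
    by rewrite [m * b]mulrC -[- d - b * m]/e -Hte; ring.
  rewrite -/d; clearbody t e m d b; lra.
have Haq := Ha q Hq.
have HF : F q <= m by apply: le_bigmax_In.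
have : ip q y2 < (m + t) * a q by rewrite -ltr_pdivrMr //; rewrite /F in HF; lra.
rewrite /a; lra.
Qed.

Lemma comb_map (I : eqType) (P : I -> J -> R) s w j : uniq s -> size w = size s ->
  comb w (map P s) j = \sum_(i <- s) nth 0 w (index i s) * P i j.
Proof.
elim: s w => [|i0 s IH] [|a w] //=; first by rewrite !big_nil.
move=> /andP [Hni Hu] [Hs].
rewrite !big_cons /= eqxx /= IH //; congr (_ + _); apply: eq_big_seq => i Hi.
have Hne : (i0 == i) = false by apply/negbTE/eqP => E; rewrite E Hi in Hni.
by rewrite Hne.
Qed.

Lemma sum_map (I : eqType) (s : seq I) (w : seq R) : uniq s -> size w = size s ->
  \sum_(a <- w) a = \sum_(i <- s) nth 0 w (index i s).
Proof.
elim: s w => [|i0 s IH] [|a w] //=; first by rewrite !big_nil.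
move=> /andP [Hni Hu] [Hs].
rewrite !big_cons /= eqxx /= (IH w) //; congr (_ + _); apply: eq_big_seq => i Hi.
have Hne : (i0 == i) = false by apply/negbTE/eqP => E; rewrite E Hi in Hni.
by rewrite Hne.
Qed.

Lemma gordan_fin (I : finType) (P : I -> J -> R) :
  (exists x : I -> R, (forall i, 0 <= x i) /\ 0 < \sum_i x i /\ forall j, \sum_i x i * P i j = 0)
  \/ (exists y, forall i, ip (P i) y < 0).
Proof.
have [[w [Hw1 [Hw2 [Hw3 Hw4]]]]|[y Hy]] := @gordan (size (map P (enum I))) _ erefl.
  rewrite size_map in Hw1.
  left; exists (fun i => nth 0 w (index i (enum I))); split.
    move=> i; case: (ltnP (index i (enum I)) (size w)) => H.
      by apply: Hw2; apply: mem_nth.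
    by rewrite nth_default.
  split; first by rewrite -big_enum /= -(sum_map (enum_uniq I) Hw1).
  by move=> j; rewrite -big_enum /= -(comb_map P j (enum_uniq I) Hw1) Hw4.
right; exists y => i; apply: Hy; apply: List.in_map; apply: in_In; exact: mem_enum.
Qed.

End Gordan.

Section Key.
Variable R : realType.

Lemma ip_unit (J : finType) (j' : J) (y : J -> R) :
  ip (fun j => if j == j' then -1 else 0) y = - y j'.
Proof.
rewrite /ip (bigD1 j') //= eqxx big1 ?addr0 ?mulN1r // => j /negbTE ->; by rewrite mul0r.
Qed.

Lemma key (I J : finType) (M : I -> J -> R) (c : R) (j0 : J) :
  (forall y : J -> R, mixed y -> exists i, c <= \sum_j M i j * y j) ->
  exists x : I -> R, mixed x /\ forall j, c <= \sum_i x i * M i j.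
Proof.
move=> Hyp.
pose P (k : I + J) : J -> R := match k with inl i => fun j => M i j - c
  | inr j' => fun j => if j == j' then -1 else 0 end.
have [[x [Hx1 [Hx2 Hx3]]]|[y Hy]] := gordan_fin P.
  have H j : \sum_i x (inl i) * (M i j - c) = x (inr j).
    have := Hx3 j; rewrite big_sumType /=.
    have -> : \sum_j' x (inr j') * (if j == j' then -1 else 0) = - x (inr j).
      rewrite (bigD1 j) //= eqxx big1 ?addr0 ?mulrN1 // => j' Hj'.
      by rewrite eq_sym (negbTE Hj') mulr0.
    move=> E; lra.
  set s := \sum_i x (inl i).
  have Hs0 : 0 <= s by apply: sumr_ge0 => i _.
  have Hs : 0 < s.
    rewrite lt_def Hs0 andbT; apply/eqP => E.
    have Z := psumr_eq0P (fun i _ => Hx1 (inl i)) E.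
    have Zr j : x (inr j) = 0.
      by rewrite -H big1 // => i _; rewrite Z // mul0r.
    move: Hx2; rewrite big_sumType /= -/s E add0r big1 ?ltxx // => j _; exact: Zr.
  exists (fun i => x (inl i) / s); split.
    split; first by move=> i; apply: divr_ge0.
    by rewrite -mulr_suml -/s divff // lt0r_neq0.
  move=> j.
  have -> : \sum_i x (inl i) / s * M i j = (\sum_i x (inl i) * M i j) / s.
    by rewrite mulr_suml; apply: eq_bigr => i _; ring.
  rewrite ler_pdivlMr //.
  have E : \sum_i x (inl i) * (M i j - c) = \sum_i x (inl i) * M i j - c * s.
    by rewrite /s mulr_sumr -sumrB; apply: eq_bigr => i _; ring.
  have := Hx1 (inr j); rewrite -H E; lra.
have Hyp' j : 0 < y j by have := Hy (inr j); rewrite /= ip_unit oppr_lt0.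
set s := \sum_j y j.
have Hs : 0 < s.
  rewrite /s (bigD1 j0) //=; apply: ltr_wpDr; last exact: Hyp'.
  by apply: sumr_ge0 => j _; apply: ltW.
have [i Hi] : exists i, c <= \sum_j M i j * (y j / s).
  apply: Hyp; split; first by move=> j; apply: divr_ge0 => //; apply: ltW.
  by rewrite -mulr_suml -/s divff // lt0r_neq0.
have := Hy (inl i); rewrite /= /ip.
have -> : \sum_j (M i j - c) * y j = \sum_j M i j * y j - c * s.
  by rewrite /s mulr_sumr -sumrB; apply: eq_bigr => j _; ring.
have E : \sum_j M i j * (y j / s) = (\sum_j M i j * y j) / s.
  by rewrite mulr_suml; apply: eq_bigr => j _; ring.
move: Hi; rewrite E ler_pdivlMr //; lra.
Qed.

End Key.

Section SupPart.
Variable R : realType.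
Local Open Scope classical_set_scope.

Lemma mixed_le1 (I : finType) (x : I -> R) : mixed x -> forall i, x i <= 1.
Proof.
move=> [H0 H1] i; rewrite -H1 (bigD1 i) //= lerDl; exact: sumr_ge0.
Qed.

Lemma mixed_delta (I : finType) (i0 : I) : mixed (fun i : I => if i == i0 then 1 else 0 : R).
Proof.
split; first by move=> i; case: ifP => _; [apply: ler01|apply: lexx].
by rewrite (bigD1 i0) //= eqxx big1 ?addr0 // => i /negbTE ->.
Qed.

Lemma sup_ge (V : set R) (Kb w : R) : V w -> (forall v, V v -> v <= Kb) -> w <= sup V.
Proof. by move=> Vw HK; apply: ub_le_sup => //; exists Kb. Qed.

Lemma sup_lt (I : finType) (i0 : I) (v : I -> R) c (V : set R) :
  (forall i, v i < c) -> V !=set0 ->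
  (forall w, V w -> exists2 x, mixed x & w = \sum_i x i * v i) -> sup V < c.
Proof.
move=> Hv Vn HV.
set m := \big[Num.max/v i0]_i v i.
have Hm : m < c by apply: (big_ind (fun x => x < c)) => // x y Hx Hy; rewrite maxEle; case: ifP.
have Hvm i : v i <= m by rewrite /m (bigD1 i) //= le_max lexx.
apply: le_lt_trans Hm; apply: ge_sup => // w /HV [x [Hx0 Hx1] ->].
apply: le_trans (_ : \sum_i x i * m <= m).
  by apply: ler_sum => i _; apply: ler_wpM2l.
by rewrite -mulr_suml Hx1 mul1r.
Qed.

Lemma infsup (I J : finType) (i0 : I) (F : (I -> R) -> (J -> R) -> R)
   (G : (J -> R) -> I -> R) (Kb c : R) :
  (forall x y, mixed x -> mixed y -> `|F x y| <= Kb) ->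
  (forall x y, F x y = \sum_i x i * G y i) ->
  c = inf [set r | exists2 y, mixed y & r = sup [set v | exists2 x, mixed x & v = F x y]] ->
  forall y, mixed y -> exists i, c <= G y i.
Proof.
move=> HK HF Hc y Hy.
case: (boolP [exists i, c <= G y i]) => [/existsP [i Hi]|/existsPn H]; first by exists i.
exfalso.
set W := [set r | exists2 y, mixed y & r = sup [set v | exists2 x, mixed x & v = F x y]].
have Hd := mixed_delta i0.
have HW : has_lbound W.
  exists (- Kb) => r [y' Hy' ->].
  have Hb := HK _ _ Hd Hy'.
  apply: (@le_trans _ _ (F (fun i : I => if i == i0 then 1 else 0) y')).
    by move: Hb; rewrite ler_norml => /andP [H1 _].
  apply: (sup_ge (Kb := Kb)); first by exists (fun i : I => if i == i0 then 1 else 0).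
  by move=> v [x Hx ->]; have := HK _ _ Hx Hy'; rewrite ler_norml => /andP [_ H2].
have Hle : c <= sup [set v | exists2 x, mixed x & v = F x y].
  by rewrite Hc; apply: ge_inf => //; exists y.
have Hlt : sup [set v | exists2 x, mixed x & v = F x y] < c.
  apply: (@sup_lt I i0 (G y)).
  - by move=> i; rewrite ltNge; apply: H.
  - by exists (F (fun i : I => if i == i0 then 1 else 0) y); exists (fun i : I => if i == i0 then 1 else 0).
  - by move=> w [x Hx ->]; exists x => //; apply: HF.
lra.
Qed.

End SupPart.

Section MainPart.
Variables (R : realType) (S T : finType).
Local Open Scope classical_set_scope.

Definition Kb (A : S -> T -> R) := \sum_s \sum_t `|A s t|.

Lemma bilin_bound (A : S -> T -> R) x y : mixed x -> mixed y -> `|bilin A x y| <= Kb A.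
Proof.
move=> Hx Hy; have X1 := mixed_le1 Hx; have Y1 := mixed_le1 Hy.
case: Hx => Hx0 _; case: Hy => Hy0 _.
rewrite /bilin; apply: le_trans (ler_norm_sum _ _ _) _; apply: ler_sum => s _.
apply: le_trans (ler_norm_sum _ _ _) _; apply: ler_sum => t _.
rewrite !normrM (ger0_norm (Hx0 s)) (ger0_norm (Hy0 t)).
have h : x s * y t <= 1 by apply: mulr_ile1.
have h2 : 0 <= `|A s t| by [].
rewrite -mulrA; have := Hx0 s; have := Hy0 t; nra.
Qed.

Lemma exists_eq (A B : S -> T -> R) (s0 : S) (t0 : T) :
  exists p, Eq_payoffs A B p.
Proof.
have Ha : forall y, mixed y -> exists s, alpha A <= \sum_t A s t * y t.
  apply: (@infsup R S T s0 (fun x y => bilin A x y) (fun y s => \sum_t A s t * y t) (Kb A)).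
  - exact: bilin_bound.
  - move=> x y; rewrite /bilin; apply: eq_bigr => s _; rewrite mulr_sumr.
    by apply: eq_bigr => t _; ring.
  - by [].
have Hb : forall x, mixed x -> exists t, beta B <= \sum_s B s t * x s.
  apply: (@infsup R T S t0 (fun y x => bilin B x y) (fun x t => \sum_s B s t * x s) (Kb B)).
  - by move=> y x Hy Hx; apply: bilin_bound.
  - move=> y x; rewrite /bilin exchange_big; apply: eq_bigr => t _; rewrite mulr_sumr.
    by apply: eq_bigr => s _; ring.
  - by [].
have [x [Hx Hxa]] := key t0 Ha.
have [y [Hy Hyb]] := @key R T S (fun t s => B s t) (beta B) s0 Hb.
exists (\sum_s \sum_t (x s * y t) * A s t, \sum_s \sum_t (x s * y t) * B s t).
case: (Hx) => Hx0 Hx1; case: (Hy) => Hy0 Hy1.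
split.
  exists (fun s t => x s * y t); split; first by move=> s t; apply: mulr_ge0.
  split => //.
  under eq_bigr => s _ do rewrite -mulr_sumr Hy1 mulr1.
  exact: Hx1.
split => /=.
  have -> : \sum_s \sum_t (x s * y t) * A s t = \sum_t y t * \sum_s x s * A s t.
    rewrite exchange_big; apply: eq_bigr => t _; rewrite mulr_sumr.
    by apply: eq_bigr => s _; ring.
  apply: le_trans (_ : \sum_t y t * alpha A <= _).
    by rewrite -mulr_suml Hy1 mul1r.
  by apply: ler_sum => t _; apply: ler_wpM2l.
have -> : \sum_s \sum_t (x s * y t) * B s t = \sum_s x s * \sum_t y t * B s t.
  apply: eq_bigr => s _; rewrite mulr_sumr.
  by apply: eq_bigr => t _; ring.
apply: le_trans (_ : \sum_s x s * beta B <= _).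
  by rewrite -mulr_suml Hx1 mul1r.
by apply: ler_sum => s _; apply: ler_wpM2l.
Qed.

End MainPart.

Unset Implicit Arguments.
Local Open Scope classical_set_scope.

Theorem mainTheorem8 (R : realType) (S T : finType)
  (HS : (0 < #|S|)%N) (HT : (0 < #|T|)%N)
  (A B : S -> T -> R) (eps f g : R) (Heps : 0 < eps)
  (Hne : Eacc A B eps f g !=set0)
  (Hcase : (alpha A <= f - eps /\ beta B <= g - eps) \/
           (f - eps < alpha A /\ g - eps < beta B)) :
  Eq_payoffs A B `&` Eacc A B eps f g !=set0.
Proof.
case: Hcase => [[H1 H2]|[H1 H2]].
  case: Hne => p [Hco [Hf Hg]].
  exists p; split; last by [].
  by split => //; split; lra.
case/card_gt0P: HS => s0 _; case/card_gt0P: HT => t0 _.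
have [p [Hco [Ha Hb]]] := exists_eq A B s0 t0.
exists p; split; first by [].
by split => //; split; lra.
Qed.
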